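(* In the setting below, suppose that $x\mapsto f(x)+g(Ax)$ is bounded below and $\{x: x\in\operatorname{ri}(\operatorname{dom}f),\ Ax\in\operatorname{ri}(\operatorname{dom}g),\ Bx\le b\}\ne\emptyset$ (''$\operatorname{ri}$'' omitted for polyhedral $f$ or $g$). Let $w^*=[y^*;z^*]$ be a local minimizer of $G_+^\mu(w)=\Xi(w)+\Psi_{+,\mu}(z)$ (for some $\mu>0$), let $T_*=\{i:z^*_i\ne0\}$, $\bar T_*=[r]\setminus T_*$, let $$\Omega_+:=\operatorname{argmin}_{w=[y;z]}\{\Xi(w):\ z_{\bar T_*}=0,\ z_{T_*}\ge0\},$$ and assume $w^*\in\operatorname{argmin}\{\|z\|_0:\ w=[y;z]\in\Omega_+\}$. Define $\eta_0:=\min_w\{\Xi(w): z_{\bar T_*}=0,\ z_{T_*}\ge0\}$, $\eta_1:=\min_{S\subsetneq T_*}\min_w\{\Xi(w): z_{\bar S}=0,\ z_S\ge0\}$, $\eta_2:=\min_{S\not\subseteq T_*}\min_w\{\Xi(w): z_{\bar S}=0,\ z_S\ge0\}$ (a minimum over an empty family of index sets being $+\infty$). If $\mu'\in\mathbb R^r$, $\mu'>0$, satisfies $\sum_{i\in T_*}\mu'_i\le\eta_1-\eta_0$ and $\mu'_j>\max\{\eta_1-\eta_2,0\}$ for all $j\in\bar T_*$, then $w^*$ is a global minimizer of $\Xi(w)+\Psi_{+,\mu'}(z)$.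
   Context: Let $f:\mathbb R^n\to(-\infty,\infty]$, $g:\mathbb R^m\to(-\infty,\infty]$ be proper, lsc and convex with conjugates $f^*,g^*$; $A\in\mathbb R^{m\times n}$, $B\in\mathbb R^{r\times n}$, $b\in\mathbb R^r$. For $w=[y;z]\in\mathbb R^m\times\mathbb R^r$, $\Xi(w)=f^*(-A^\top y-B^\top z)+g^*(y)+\langle b,z\rangle$; $\Psi_{+,\mu}(z)=\sum_{i=1}^r\mu_i\mathbf 1_{\{z_i\ne0\}}+\delta(z\mid\mathbb R^r_+)$. $\|z\|_0$ is the number of nonzero entries of $z$; $[r]=\{1,\dots,r\}$, $\bar S=[r]\setminus S$, $z_S$ the subvector indexed by $S$. $\operatorname{ri}$ denotes relative interior. *)

(* Defs.v *)
From HB Require Import structures.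
From mathcomp Require Import all_boot all_order all_algebra.
From mathcomp Require Import all_classical all_reals ereal.
Set Implicit Arguments. Unset Strict Implicit. Unset Printing Implicit Defensive.
Import Order.TTheory GRing.Theory Num.Theory.
Local Open Scope classical_set_scope.
Local Open Scope ring_scope.

Section Defs.
Variable R : realType.

Definition dotv (n : nat) (u v : 'cV[R]_n) : R := \sum_(i < n) u i 0 * v i 0.

(* sup-norm open ball (equivalent to Euclidean ball for all purposes here) *)
Definition near_vec (n : nat) (x y : 'cV[R]_n) (e : R) : Prop :=
  forall i, `|y i 0 - x i 0| < e.

Definition edom (n : nat) (f : 'cV[R]_n -> \bar R) : set 'cV[R]_n :=
  [set x | (f x < +oo)%E].

Definition proper_fun (n : nat) (f : 'cV[R]_n -> \bar R) : Prop :=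
  (exists x, (f x < +oo)%E) /\ (forall x, f x != -oo%E).

Definition lsc_fun (n : nat) (f : 'cV[R]_n -> \bar R) : Prop :=
  forall x (t : R), (t%:E < f x)%E ->
    exists2 e : R, 0 < e & forall y, near_vec x y e -> (t%:E < f y)%E.

Definition convex_fun (n : nat) (f : 'cV[R]_n -> \bar R) : Prop :=
  forall (x y : 'cV[R]_n) (t : R), 0 < t -> t < 1 ->
    (f (t *: x + (1 - t) *: y)%R <= t%:E * f x + (1 - t)%:E * f y)%E.

Definition conj_fun (n : nat) (f : 'cV[R]_n -> \bar R) (u : 'cV[R]_n) : \bar R :=
  ereal_sup [set ((dotv u x)%:E - f x)%E | x in [set: 'cV[R]_n]].

Definition aff_hull (n : nat) (C : set 'cV[R]_n) : set 'cV[R]_n :=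
  [set y | exists (k : nat) (p : 'I_k -> 'cV[R]_n) (l : 'I_k -> R),
     [/\ forall i, C (p i), \sum_(i < k) l i = 1 & y = \sum_(i < k) l i *: p i]].

Definition rel_int (n : nat) (C : set 'cV[R]_n) : set 'cV[R]_n :=
  [set x | C x /\ exists2 e : R, 0 < e &
     forall y, near_vec x y e -> aff_hull C y -> C y].

(* polyhedral convex function: its epigraph is a finite intersection of
   closed half-spaces of R^n x R (Rockafellar, Sec. 19) *)
Definition polyhedral_fun (n : nat) (f : 'cV[R]_n -> \bar R) : Prop :=
  exists (k : nat) (a : 'I_k -> 'cV[R]_n) (be al : 'I_k -> R),
    forall (x : 'cV[R]_n) (t : R),
      (f x <= t%:E)%E <-> (forall i, dotv (a i) x + be i * t <= al i).

Definition Xi (n m r : nat) (f : 'cV[R]_n -> \bar R) (g : 'cV[R]_m -> \bar R)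
  (A : 'M[R]_(m, n)) (B : 'M[R]_(r, n)) (b : 'cV[R]_r)
  (y : 'cV[R]_m) (z : 'cV[R]_r) : \bar R :=
  (conj_fun f (- (A^T *m y) - B^T *m z)%R + conj_fun g y + (dotv b z)%:E)%E.

Definition Psi_plus (r : nat) (mu : 'cV[R]_r) (z : 'cV[R]_r) : \bar R :=
  ((\sum_(i < r) (if z i 0 != 0 then mu i 0 else 0))%R%:E
   + (if [forall i, (0 <= z i 0)%R] then 0 else +oo))%E.

Definition l0norm (r : nat) (z : 'cV[R]_r) : nat := #|[set i | z i 0 != 0]|.

Definition supp (r : nat) (z : 'cV[R]_r) : {set 'I_r} := [set i | z i 0 != 0].

Definition feasS (r : nat) (S : {set 'I_r}) (z : 'cV[R]_r) : Prop :=
  forall i, (i \notin S -> z i 0 = 0) /\ (i \in S -> 0 <= z i 0).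

Definition valS (n m r : nat) (f : 'cV[R]_n -> \bar R) (g : 'cV[R]_m -> \bar R)
  (A : 'M[R]_(m, n)) (B : 'M[R]_(r, n)) (b : 'cV[R]_r) (S : {set 'I_r}) : \bar R :=
  ereal_inf [set Xi f g A B b w.1 w.2 | w in [set w : 'cV[R]_m * 'cV[R]_r | feasS S w.2]].

End Defs.

(* Main.v *)
Require Import Defs.
From HB Require Import structures.
From mathcomp Require Import all_boot all_order all_algebra.
From mathcomp Require Import all_classical all_reals ereal.
From mathcomp Require Import lra.
Import Order.TTheory GRing.Theory Num.Theory.
Local Open Scope classical_set_scope.
Local Open Scope ring_scope.

Lemma conj_gtNy (R : realType) n (f : 'cV[R]_n -> \bar R) u :
  proper_fun f -> (-oo < conj_fun f u)%E.
Proof.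
case=> [[x fx] fNy].
have : ((dotv u x)%:E - f x <= conj_fun f u)%E.
  by apply: ereal_sup_ubound; exists x.
move: fx (fNy x); case: (f x) => [v| |] //= _ _ H.
by apply: lt_le_trans H; rewrite ltNyr.
Qed.

Lemma Xi_gtNy (R : realType) (n m r : nat) (f : 'cV[R]_n -> \bar R) (g : 'cV[R]_m -> \bar R) (A : 'M[R]_(m,n)) (B : 'M[R]_(r,n)) (b : 'cV[R]_r) y z :
  proper_fun f -> proper_fun g -> (-oo < Xi f g A B b y z)%E.
Proof.
move=> pf pg; rewrite /Xi.
have h1 : (-oo < conj_fun f (- (A^T *m y) - B^T *m z))%E by apply: conj_gtNy.
have h2 : (-oo < conj_fun g y)%E by apply: conj_gtNy.
move: h1 h2; case: (conj_fun f _) => [u1| |] //; case: (conj_fun g y) => [u2| |] //.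
by move=> _ _; rewrite -!EFinD ltNyr.
Qed.

Lemma aux (R : realType) (a c : \bar R) (p x s : R) :
  (p%:E <= a)%E -> (c <= x%:E)%E -> (maxe (a - c) 0 < s%:E)%E -> p <= x + s.
Proof.
case: a => [a| |]; case: c => [c| |] //=; rewrite ?lee_fin.
- move=> h1 h2 h3; have : ((a - c)%:E < s%:E)%E.
    by apply: le_lt_trans h3; rewrite le_max lexx.
  rewrite lte_fin => h; lra.
Qed.

Lemma Psi_pos (R : realType) (r : nat) (mu z : 'cV[R]_r) :
  [forall i, (0 <= z i 0)%R] -> Psi_plus mu z = (\sum_(i in supp z) mu i 0)%:E.
Proof.
move=> H; rewrite /Psi_plus H adde0; congr (_%:E).
by rewrite [RHS]big_mkcond; apply: eq_bigr => i _; rewrite /supp inE.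
Qed.

Lemma Psi_neg (R : realType) (r : nat) (mu z : 'cV[R]_r) :
  ~~ [forall i, (0 <= z i 0)%R] -> Psi_plus mu z = +oo%E.
Proof. by move/negbTE=> H; rewrite /Psi_plus H addey. Qed.

Lemma feas_supp (R : realType) (r : nat) (z : 'cV[R]_r) :
  [forall i, (0 <= z i 0)%R] -> feasS (supp z) z.
Proof.
move=> /forallP H i; rewrite /supp !inE negbK; split.
  by move/eqP.
by move=> _; exact: H.
Qed.

Lemma sum_ge_one (R : realType) (r : nat) (mu : 'cV[R]_r) (S : {set 'I_r}) j :
  (forall i, 0 < mu i 0) -> j \in S -> mu j 0 <= \sum_(i in S) mu i 0.
Proof.
move=> hp hj; rewrite (bigD1 j) //= lerDl; apply: sumr_ge0 => i _.
exact: ltW.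
Qed.

Arguments aux {R a c p x s}.
Arguments Psi_pos {R r mu z}.
Arguments Psi_neg {R r mu z}.
Arguments feas_supp {R r z}.
Arguments sum_ge_one {R r mu S j}.

Theorem mainTheorem18 (R : realType) (n m r : nat)
  (f : 'cV[R]_n -> \bar R) (g : 'cV[R]_m -> \bar R)
  (A : 'M[R]_(m, n)) (B : 'M[R]_(r, n)) (b : 'cV[R]_r)
  (mu mu' : 'cV[R]_r) (ys : 'cV[R]_m) (zs : 'cV[R]_r) :
  proper_fun f -> lsc_fun f -> convex_fun f ->
  proper_fun g -> lsc_fun g -> convex_fun g ->
  (* x |-> f(x) + g(Ax) is bounded below *)
  (exists M : R, forall x, (M%:E <= f x + g (A *m x))%E) ->
  (* constraint qualification, ri omitted for polyhedral f or g *)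
  (exists x : 'cV[R]_n,
     [/\ rel_int (edom f) x \/ (polyhedral_fun f /\ edom f x),
         rel_int (edom g) (A *m x) \/ (polyhedral_fun g /\ edom g (A *m x))
       & forall i, (B *m x) i 0 <= b i 0]) ->
  (forall i, 0 < mu i 0) ->
  (* w* = (ys, zs) is a local minimizer of Xi + Psi_{+,mu} *)
  (exists2 e : R, 0 < e & forall y z, near_vec ys y e -> near_vec zs z e ->
     (Xi f g A B b ys zs + Psi_plus mu zs <= Xi f g A B b y z + Psi_plus mu z)%E) ->
  let T := supp zs in
  let Omega := [set w : 'cV[R]_m * 'cV[R]_r | feasS T w.2 /\
                 forall y z, feasS T z -> (Xi f g A B b w.1 w.2 <= Xi f g A B b y z)%E] in
  Omega (ys, zs) ->
  (forall w, Omega w -> (l0norm zs <= l0norm w.2)%N) ->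
  let eta0 := valS f g A B b T in
  let eta1 := ereal_inf [set valS f g A B b S | S in [set S : {set 'I_r} | S \proper T]] in
  let eta2 := ereal_inf [set valS f g A B b S | S in [set S : {set 'I_r} | ~~ (S \subset T)]] in
  (forall i, 0 < mu' i 0) ->
  ((\sum_(i in T) mu' i 0)%:E <= eta1 - eta0)%E ->
  (forall j, j \notin T -> (maxe (eta1 - eta2) 0 < (mu' j 0)%:E)%E) ->
  forall y z,
    (Xi f g A B b ys zs + Psi_plus mu' zs <= Xi f g A B b y z + Psi_plus mu' z)%E.
Proof.
move=> pf _ _ pg _ _ _ _ _ _ T Omega hOm _ eta0 eta1 eta2 hmu' hsum hj y z.
have hfT : feasS T zs := hOm.1.
have hX0 : Xi f g A B b ys zs = eta0.
  apply/le_anti/andP; split.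
  - apply: le_ereal_inf_tmp => _ [w hw <-]; exact: hOm.2 _ _ hw.
  - by apply: ereal_inf_lbound; exists (ys, zs).
have zs_pos : [forall i, 0 <= zs i 0].
  apply/forallP => i; case: (hfT i) => h1 h2.
  by case: (boolP (i \in T)) => hi; [exact: h2 | rewrite h1].
have hPs : Psi_plus mu' zs = (\sum_(i in T) mu' i 0)%:E := Psi_pos zs_pos.
have hX0g : (-oo < Xi f g A B b ys zs)%E by apply: Xi_gtNy.
have hXg : (-oo < Xi f g A B b y z)%E by apply: Xi_gtNy.
case E0: eta0 => [e0| |]; last by move: hX0g; rewrite hX0 E0.
  2: by move: hsum; rewrite E0 addeNy leNgt ltNyr.
move: hsum; rewrite E0 leeBrDr // -EFinD => hsum.
rewrite hX0 E0 hPs.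
case: (boolP [forall i, 0 <= z i 0]) => zp; last first.
  by rewrite Psi_neg // addey ?leey // -ltNye.
rewrite Psi_pos //.
have hfz := feas_supp zp.
have hvS : (valS f g A B b (supp z) <= Xi f g A B b y z)%E.
  by apply: ereal_inf_lbound; exists (y, z).
move: hXg hvS; case: (Xi f g A B b y z) => [x| |] // _ hvS; last first.
  by rewrite addye ?leey.
rewrite -!EFinD lee_fin.
have sS0 : 0 <= \sum_(i in supp z) mu' i 0 by apply: sumr_ge0 => i _; exact: ltW.
case: (boolP (supp z \subset T)) => hST.
  case: (boolP (T \subset supp z)) => hTS.
    have ST : supp z = T by apply/eqP; rewrite finset.eqEsubset hST hTS.
    have : (eta0 <= x%:E)%E by rewrite /eta0 -ST.
    rewrite E0 lee_fin ST => h; lra.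
  have : (eta1 <= x%:E)%E.
    apply: le_trans hvS; apply: ereal_inf_lbound; exists (supp z) => //=.
    by rewrite properE hST hTS.
  move=> h; have := le_trans hsum h; rewrite lee_fin => h2; lra.
move/subsetPn: (hST) => [j hjS hjT].
have h2 : (eta2 <= x%:E)%E.
  by apply: le_trans hvS; apply: ereal_inf_lbound; exists (supp z).
have := aux hsum h2 (hj j hjT).
have := sum_ge_one hmu' hjS => h3 h4; lra.
Qed.
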